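(* Let $m=m(n)=O(n\log\log n)$ and let $G\sim G(n,m)$. Then, for all sufficiently large $n$, $$\Pr\big(\delta(G)\geq 2\big)\leq n\,e^{-2m e^{-2m/n}}.$$
   Context: $G(n,m)$ is the uniform random graph model: $G$ is chosen uniformly at random among all graphs on vertex set $[n]$ with exactly $m$ edges. $\delta(G)$ denotes the minimum degree of $G$. *)

(* Defs.v *)
From mathcomp Require Import all_boot.
From Stdlib Require Import Reals.
Set Implicit Arguments. Unset Strict Implicit. Unset Printing Implicit Defensive.

Definition is_graph (n : nat) (E : {set {set 'I_n}}) : bool :=
  [forall e in E, #|e| == 2].

Definition Gnm (n m : nat) : {set {set {set 'I_n}}} :=
  [set E | is_graph E && (#|E| == m)].

Definition deg (n : nat) (E : {set {set 'I_n}}) (v : 'I_n) : nat :=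
  #|[set e in E | v \in e]|.

Definition mindeg_ge2 (n : nat) (E : {set {set 'I_n}}) : bool :=
  [forall v, 2 <= deg E v].

Definition prob_mindeg_ge2 (n m : nat) : R :=
  (INR #|[set E in Gnm n m | mindeg_ge2 E]| / INR #|Gnm n m|)%R.

(* Main.v *)
Require Import Defs.
From mathcomp Require Import all_boot all_order all_algebra.
From mathcomp Require Import ring.
From mathcomp Require Import Rstruct.
Set Implicit Arguments. Unset Strict Implicit. Unset Printing Implicit Defensive.
Import Order.TTheory GRing.Theory Num.Theory.
Section Comb.
Variable (D : finType).

Definition okp n (X : {set D}) : {set {ffun D -> option 'I_n}} :=
  [set f : {ffun D -> option 'I_n} | [forall d, (f d == None) == (d \notin X)] &&
           [forall v : 'I_n, 1 < #|[set d | f d == Some v]|]].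

Definition liftf n (Y : {set D}) (g : {ffun D -> option 'I_n}) : {ffun D -> option 'I_n.+1} :=
  [ffun d => if d \in Y then Some ord_max else omap (lift ord_max) (g d)].
Definition lowf n (f : {ffun D -> option 'I_n.+1}) : {ffun D -> option 'I_n} :=
  [ffun d => obind (unlift ord_max) (f d)].
Definition topset n (f : {ffun D -> option 'I_n.+1}) : {set D} :=
  [set d | f d == Some ord_max].

Lemma liftf_low n (f : {ffun D -> option 'I_n.+1}) : liftf (topset f) (lowf f) = f.
Proof.
apply/ffunP => d; rewrite !ffunE inE; case: (f d) => [v|] //=.
case: eqP => [[->]|ne] //.
case: unliftP => [w ->|e] //=; by rewrite e in ne.
Qed.

Lemma topset_ok n (f : {ffun D -> option 'I_n.+1}) X :
  f \in okp n.+1 X -> (topset f \subset X) && (1 < #|topset f|).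
Proof.
rewrite inE => /andP[/forallP H1 /forallP H2]; apply/andP; split; last exact: H2.
apply/subsetP => d; rewrite inE => /eqP e; move: (H1 d); rewrite e /=.
by case: (d \in X).
Qed.

Lemma low_okp n (f : {ffun D -> option 'I_n.+1}) X :
  f \in okp n.+1 X -> lowf f \in okp n (X :\: topset f).
Proof.
rewrite !inE => /andP[/forallP H1 /forallP H2]; apply/andP; split.
  apply/forallP => d; move: (H1 d); rewrite !ffunE !inE.
  case: (f d) => [v|] /=; last by case: (d \in X).
  case: (d \in X) => //= _.
  case: unliftP => [w ->|->] /=; last by rewrite !eqxx.
  have nl := neq_lift ord_max w; have -> : (Some (lift ord_max w) != Some ord_max) by apply/eqP => -[e]; move/eqP: nl; apply; apply: val_inj; rewrite /= e.
  by [].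
apply/forallP => w; apply: leq_trans (H2 (lift ord_max w)) _.
apply: subset_leq_card; apply/subsetP => d; rewrite !inE ffunE => /eqP ->.
by rewrite /= liftK.
Qed.

Lemma okp_step n X :
  #|okp n.+1 X| <= \sum_(Y : {set D} | (Y \subset X) && (1 < #|Y|)) #|okp n (X :\: Y)|.
Proof.
rewrite -sum1_card (partition_big (@topset n) (fun Y => (Y \subset X) && (1 < #|Y|))) /=; last first.
  by move=> f; apply: topset_ok.
apply: leq_sum => Y _; rewrite sum1dep_card.
set A := [set _ | _].
rewrite -(@card_in_imset _ _ (@lowf n) A); last first.
  move=> f g; rewrite !inE => /andP[_ /eqP ef] /andP[_ /eqP eg] el.
  by rewrite -(liftf_low f) -(liftf_low g) ef eg el.
apply: subset_leq_card; apply/subsetP => g /imsetP[f]; rewrite inE => /andP[fo /eqP <-] ->.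
exact: low_okp.
Qed.


Section Real.
Variable (R : realFieldType) (lam : R).
Local Open Scope ring_scope.
Hypothesis lam_gt0 : 0 < lam.

Definition hsum : R := \sum_(j < #|D|.+1 | (1 < j)%N) lam ^+ j / (j`!)%:R.

Lemma hsum_ge0 : 0 <= hsum.
Proof.
apply: sumr_ge0 => j _; apply: divr_ge0; [exact: exprn_ge0 (ltW lam_gt0)|exact: ler0n].
Qed.

Lemma sum_subsets (X : {set D}) (F : nat -> R) :
  \sum_(Y : {set D} | Y \subset X) F #|Y| =
  \sum_(j < #|X|.+1) ('C(#|X|, j))%:R * F j.
Proof.
rewrite (partition_big (fun Y : {set D} => (inord #|Y| : 'I_#|X|.+1)) predT) //=.
apply: eq_bigr => j _.
rewrite (eq_bigr (fun _ => F j)); last first.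
  move=> Y /andP[sYX /eqP <-]; rewrite inordK //; rewrite ltnS; exact: subset_leq_card.
rewrite sumr_const -cards_draws mulr_natl.
congr (_ *+ _).
apply: eq_card => Y; rewrite !inE; apply/andP/andP => [[sYX /eqP <-]|[sYX /eqP e]].
  rewrite inordK //; rewrite ltnS; exact: subset_leq_card.
split => //; apply/eqP/val_inj => /=; rewrite inordK // e; exact: ltn_ord.
Qed.

Lemma term_eq (x j : nat) (hn : R) : (j <= x)%N ->
  ('C(x, j))%:R * ((x - j)`!%:R * hn / lam ^+ (x - j)) =
  x`!%:R * hn / lam ^+ x * (lam ^+ j / (j`!)%:R).
Proof.
move=> jx.
have e := bin_fact jx.
have -> : (x`!)%:R = ('C(x, j))%:R * ((j`!)%:R * ((x - j)`!)%:R) :> R by rewrite -!natrM e.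
have -> : lam ^+ x = lam ^+ (x - j) * lam ^+ j by rewrite -exprD subnK.
have l0 : lam != 0 by rewrite gt_eqF.
have f0 : (j`!)%:R != 0 :> R by rewrite pnatr_eq0 -lt0n fact_gt0.
field; by rewrite f0 !expf_neq0.
Qed.

Lemma okp_bound n (X : {set D}) :
  (#|okp n X|%:R : R) <= (#|X|)`!%:R * hsum ^+ n / lam ^+ #|X|.
Proof.
elim: n X => [|n IH] X.
  case: (set_0Vmem X) => [->|[x xX]].
    rewrite cards0 fact0 expr0 expr0 mulr1 divr1 (_ : 1 = 1%:R) // ler_nat.
    apply: leq_trans (max_card _) _; rewrite card_ffun card_option card_ord.
    by rewrite exp1n.
  have -> : okp 0 X = set0.
    apply/setP => f; rewrite !inE; apply/negP => /andP[/forallP /(_ x) + _].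
    by case: (f x) => [[]|] //; rewrite xX.
  rewrite cards0; apply: divr_ge0; last exact: exprn_ge0 (ltW lam_gt0).
  apply: mulr_ge0; [exact: ler0n|exact: exprn_ge0 hsum_ge0].
apply: le_trans (_ : (\sum_(Y : {set D} | (Y \subset X) && (1 < #|Y|)%N)
                        (#|okp n (X :\: Y)|%:R : R)) <= _).
  by rewrite -natr_sum ler_nat okp_step.
apply: le_trans (_ : \sum_(Y : {set D} | (Y \subset X) && (1 < #|Y|)%N)
   ((#|X| - #|Y|)`!%:R * hsum ^+ n / lam ^+ (#|X| - #|Y|)) <= _).
  apply: ler_sum => Y /andP[sYX _].
  have -> : (#|X| - #|Y| = #|X :\: Y|)%N by rewrite cardsD (setIidPr sYX).
  exact: IH.
rewrite big_mkcondr /=.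
rewrite (sum_subsets X (fun j => if (1 < j)%N then (#|X| - j)`!%:R * hsum ^+ n / lam ^+ (#|X| - j) else 0)).
rewrite (eq_bigr (fun j : 'I_#|X|.+1 => #|X|`!%:R * hsum ^+ n / lam ^+ #|X| *
            (if (1 < j)%N then lam ^+ j / (j`!)%:R else 0))); last first.
  move=> j _; case: ifP => _; last by rewrite !mulr0.
  by apply: term_eq; rewrite -ltnS.
rewrite -mulr_sumr exprSr.
have -> : #|X|`!%:R * (hsum ^+ n * hsum) / lam ^+ #|X| =
          #|X|`!%:R * hsum ^+ n / lam ^+ #|X| * hsum by rewrite !mulrA mulrAC.
apply: ler_wpM2l.
  apply: divr_ge0; last exact: exprn_ge0 (ltW lam_gt0).
  apply: mulr_ge0; [exact: ler0n|exact: exprn_ge0 hsum_ge0].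
rewrite /hsum -big_mkcond /=.
have XD : (#|X|.+1 <= #|D|.+1)%N by rewrite ltnS max_card.
rewrite (@big_ord_widen_cond _ _ _ _ _ (fun j => (1 < j)%N) (fun j => lam ^+ j / (j`!)%:R) XD).
rewrite [X in _ <= X]big_mkcond [X in X <= _]big_mkcond /=.
apply: ler_sum => j _; case: (1 < j)%N => //=; case: (j < _)%N => //=.
apply: divr_ge0; [exact: exprn_ge0 (ltW lam_gt0)|exact: ler0n].
Qed.

Definition okseq n : {set {ffun D -> 'I_n}} :=
  [set f : {ffun D -> 'I_n} | [forall v : 'I_n, (1 < #|[set d | f d == v]|)%N]].

Lemma okseq_le n : (#|okseq n| <= #|okp n setT|)%N.
Proof.
rewrite -(@card_imset _ _ (fun f : {ffun D -> 'I_n} => [ffun d => Some (f d)])); last first.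
  move=> f g /ffunP e; apply/ffunP => d; move: (e d); rewrite !ffunE; by case.
apply: subset_leq_card; apply/subsetP => g /imsetP[f]; rewrite !inE => /forallP H ->.
apply/andP; split; first by apply/forallP => d; rewrite ffunE inE.
apply/forallP => v; apply: leq_trans (H v) _; apply: subset_leq_card.
by apply/subsetP => d; rewrite !inE ffunE.
Qed.

Lemma okseq_bound n :
  (#|okseq n|%:R : R) <= #|D|`!%:R * hsum ^+ n / lam ^+ #|D|.
Proof.
have := okp_bound n setT; rewrite cardsT => H; apply: le_trans H.
by rewrite ler_nat okseq_le.
Qed.

End Real.
End Comb.
Section Graph.
Variables (n m : nat).

Definition imS (s : {ffun 'I_m -> {set 'I_n}}) : {set {set 'I_n}} := [set s i | i : 'I_m].

Definition Sig : {set {ffun 'I_m -> {set 'I_n}}} :=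
  [set s : {ffun 'I_m -> {set 'I_n}} | injectiveb s && [forall i, #|s i| == 2] && mindeg_ge2 (imS s)].

Definition Aset : {set {set {set 'I_n}}} := [set E in Gnm n m | mindeg_ge2 E].

Lemma card_imS (s : {ffun 'I_m -> {set 'I_n}}) : injective s -> #|imS s| = m.
Proof. by move=> si; rewrite card_imset // card_ord. Qed.

Lemma Sig_fiber E : E \in Aset -> forall s,
  (s \in Sig) && (imS s == E) = (s \in ffun_on E) && injectiveb s.
Proof.
rewrite !inE => /andP[/andP[/forallP gE /eqP cE] mE] s.
apply/andP/andP => [[]|[/ffun_onP sE si]].
  rewrite !inE => /andP[/andP[si _] _] /eqP <-; split=> //.
  by apply/ffun_onP => i; apply: imset_f.
have iE : imS s = E.
  apply/eqP; rewrite eqEcard card_imS ?cE ?leqnn ?andbT; last exact/injectiveP.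
  by apply/subsetP => e /imsetP[i _ ->]; apply: sE.
split; last by rewrite iE.
rewrite !inE si iE mE andbT /=; apply/forallP => i.
by move: (gE (s i)); rewrite sE.
Qed.

Lemma Aset_Sig : #|Aset| * m`! = #|Sig|.
Proof.
rewrite -[#|Sig|]sum1_card (partition_big imS (mem Aset)) /=; last first.
  move=> s; rewrite !inE => /andP[/andP[/injectiveP si /forallP s2] md].
  rewrite md andbT card_imS // eqxx andbT.
  by apply/forallP => e; apply/implyP => /imsetP[i _ ->].
rewrite -sum_nat_const; apply: eq_bigr => E EA.
rewrite sum1dep_card (eq_card (B := [set s in ffun_on E | injectiveb s])); last first. by move=> s; rewrite [in LHS]inE (Sig_fiber EA) [in RHS]inE.
rewrite card_inj_ffuns_on card_ord.
move: EA; rewrite !inE => /andP[/andP[_ /eqP ->] _].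
by rewrite ffactnn.
Qed.

Lemma card_Gnm : #|Gnm n m| = 'C('C(n, 2), m).
Proof.
rewrite -[n in 'C(n, 2)]card_ord -card_draws -cards_draws.
apply: eq_card => E; rewrite !inE; congr (_ && _).
apply/forallP/subsetP => [H e eE|H e]; first by move: (H e); rewrite eE inE.
by apply/implyP => /H; rewrite inE.
Qed.

End Graph.

Section Phi.
Variables (n m : nat).
Notation T := 'I_n.+1.

Definition phi (s : {ffun 'I_m -> {set T}}) (b : {ffun 'I_m -> bool}) : {ffun 'I_m * bool -> T} :=
  [ffun p => if b p.1 (+) p.2 then nth ord0 (enum (s p.1)) 1 else nth ord0 (enum (s p.1)) 0].

Lemma two_set (e : {set T}) : #|e| = 2 -> exists x y, x != y /\ enum e = [:: x; y].
Proof.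
move=> c; have u := enum_uniq (mem e); move: c; rewrite cardE.
case E: (enum e) u => [|x [|y [|z l]]] //= u _.
exists x, y; split => //; by move: u; rewrite andbT inE.
Qed.

Lemma phi_inj : {in setX (@Sig n.+1 m) setT &, injective (fun p => phi p.1 p.2)}.
Proof.
move=> [s b] [s' b']; rewrite !inE /= => /andP[/andP[/andP[si /forallP s2] _] _]
   /andP[/andP[/andP[si' /forallP s2'] _] _] e.
have key : forall i, s i = s' i /\ b i = b' i.
  move=> i; have [x [y [xy ex]]] := two_set (eqP (s2 i)).
  have [x' [y' [xy' ex']]] := two_set (eqP (s2' i)).
  have e0 := congr1 (fun f : {ffun 'I_m * bool -> T} => f (i, false)) e; have e1 := congr1 (fun f : {ffun 'I_m * bool -> T} => f (i, true)) e.
  rewrite /phi !ffunE /= in e0 e1.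
  have h0 : nth ord0 (enum (s i)) 0 = x by rewrite ex.
  have h1 : nth ord0 (enum (s i)) 1 = y by rewrite ex.
  have h0' : nth ord0 (enum (s' i)) 0 = x' by rewrite ex'.
  have h1' : nth ord0 (enum (s' i)) 1 = y' by rewrite ex'.
  rewrite h0 h1 h0' h1' in e0 e1.
  have m1 : forall v, (v \in s i) = (v \in [:: x; y]) by move=> v; rewrite -mem_enum ex.
  have m2 : forall v, (v \in s' i) = (v \in [:: x'; y']) by move=> v; rewrite -mem_enum ex'.
  have sE : s i = s' i.
    apply/setP => v; rewrite m1 m2 !inE.
    move: e0 e1; case: (b i); case: (b' i) => /= e0 e1; by rewrite e0 e1 // orbC.
  split => //.
  move: h0 h1; rewrite sE h0' h1' => e2 e3.
  clear h0' h1' m1 m2 ex ex'.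
  move: e0 e1; case: (b i); case: (b' i) => //= e0 e1; subst; by rewrite eqxx in xy.
have -> : s = s' by apply/ffunP => i; case: (key i).
by have -> : b = b' by apply/ffunP => i; case: (key i).
Qed.

Lemma phi_fiber s b v : s \in @Sig n.+1 m ->
  1 < #|[set d | phi s b d == v]|.
Proof.
rewrite !inE => /andP[/andP[_ /forallP s2] /forallP md].
apply: leq_trans (md v) _; rewrite /deg.
apply: leq_trans (_ : #|[set i | v \in s i]| <= _).
  apply: leq_trans (leq_imset_card s _); apply: subset_leq_card.
  apply/subsetP => e; rewrite !inE => /andP[/imsetP[i _ ->] vi].
  by apply: imset_f; rewrite inE.
pose g i := (i, b i (+) (v == nth ord0 (enum (s i)) 1)).
rewrite -(@card_imset _ _ g); last by move=> i j /(congr1 fst).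
apply: subset_leq_card; apply/subsetP => d /imsetP[i]; rewrite inE => vi ->.
rewrite inE ffunE /= addKb.
have [x [y [xy ex]]] := two_set (eqP (s2 i)).
move: vi; rewrite -mem_enum ex !inE /=.
by case: (v =P y) => [->|_]; [rewrite eqxx | rewrite orbF => /eqP ->].
Qed.

Lemma Sig_okseq : #|@Sig n.+1 m| * 2 ^ m <= #|@okseq ('I_m * bool)%type n.+1|.
Proof.
have -> : 2 ^ m = #|[set: {ffun 'I_m -> bool}]| by rewrite cardsT card_ffun card_bool card_ord.
rewrite -cardsX -(card_in_imset phi_inj).
apply: subset_leq_card; apply/subsetP => f /imsetP[[s b]]; rewrite inE /= => /andP[sS _] ->.
by rewrite inE; apply/forallP => v; apply: phi_fiber.
Qed.

End Phi.

Lemma two_binom n : ('C(n, 2)).*2 = n * n.-1.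
Proof.
rewrite bin2 halfK oddM.
case: n => [//|k] /=; by rewrite andNb subn0.
Qed.

Lemma ffact_lb (N m : nat) : m <= N -> (N.*2 - m.*2) ^ m <= N ^_ m * 2 ^ m.
Proof.
move=> mN.
suff H : forall j, j <= m -> (N.*2 - m.*2) ^ j <= N ^_ j * 2 ^ j by apply: H.
elim=> [|j IH] jm; first by rewrite !expn0.
rewrite expnS ffactnSr expnS.
have -> : N ^_ j * (N - j) * (2 * 2 ^ j) = (N ^_ j * 2 ^ j) * ((N - j).*2).
  by rewrite -mul2n; ring.
rewrite mulnC; apply: leq_mul; first exact: IH (ltnW jm).
rewrite -!mul2n -mulnBr leq_mul2l /=; apply: leq_sub2l; exact: ltnW.
Qed.

Definition fullsum (R : realFieldType) (D : finType) (lam : R) : R :=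
  (\sum_(j < #|D|.+1) lam ^+ j / (j`!)%:R)%R.

Lemma hsum_split (R : realFieldType) (D : finType) (lam : R) : (0 < #|D|)%nat ->
  (fullsum D lam = 1 + lam + hsum D lam)%R.
Proof.
rewrite /hsum /fullsum; move: #|D| => K; case: K => [//|k] _.
rewrite [in RHS]big_mkcond /= !big_ord_recl /= fact0 expr0 expr1 divr1 factS muln1 divr1.
by rewrite !add0r addrA.
Qed.

From Stdlib Require Import Reals Lra Lia Factorial Ring Field.
Unset Implicit Arguments.
Open Scope R_scope.
Lemma exp_le_mono x y : x <= y -> exp x <= exp y.
Proof.
intros H; destruct (Rle_lt_or_eq_dec _ _ H) as [H1|H1].
- left; apply exp_increasing; exact H1.
- subst; lra.
Qed.

Lemma exp_pow x n : exp x ^ n = exp (INR n * x).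
Proof.
induction n as [|n IH].
- simpl; rewrite Rmult_0_l exp_0; reflexivity.
- rewrite S_INR; simpl; rewrite IH -exp_plus; f_equal; ring.
Qed.

Lemma exp_sum_le x K : 0 <= x -> sum_f_R0 (fun i => / INR (Factorial.fact i) * x ^ i) K <= exp x.
Proof.
intros Hx; unfold exp; destruct (exist_exp x) as [l Hl]; simpl.
apply growing_ineq; [| exact Hl].
intro k; change (sum_f_R0 ?f (S k)) with (sum_f_R0 f k + f (S k)); cbv beta.
assert (0 <= / INR (Factorial.fact (S k)) * x ^ (S k)).
{ apply Rmult_le_pos.
  - left; apply Rinv_0_lt_compat, INR_fact_lt_0.
  - apply pow_le; exact Hx. }
lra.
Qed.

Lemma fact_bound k : le 1 k -> INR (Factorial.fact k) * exp (INR k) <= exp 1 * INR k ^ (S k).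
Proof.
intros Hk; induction k as [|k IH]; [lia|].
destruct (Nat.eq_dec k 0) as [->|Hk0].
- simpl; lra.
- assert (IH' := IH ltac:(lia)).
  assert (kpos : 1 <= INR k) by (apply (le_INR 1); lia).
  revert IH' kpos. rewrite S_INR. set kr := INR k. intros IH' kpos.
  assert (key : exp 1 * kr ^ (S k) <= (kr + 1) ^ (S k)).
  { assert (E1 : 1 - / (kr + 1) <= exp (- / (kr + 1))).
    { generalize (exp_ineq1_le (- / (kr + 1))); lra. }
    assert (E2 : kr * exp (/ (kr + 1)) <= kr + 1).
    { assert (Hp : 0 < exp (/ (kr + 1))) by apply exp_pos.
      assert (Hm : exp (/ (kr + 1)) * exp (- / (kr + 1)) = 1).
      { rewrite -exp_plus; replace (/ (kr + 1) + - / (kr + 1)) with 0 by ring; apply exp_0. }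
      assert (Hk1 : 1 - / (kr + 1) = kr / (kr + 1)) by (field; lra).
      rewrite Hk1 in E1.
      apply (Rmult_le_compat_l (exp (/ (kr + 1)) * (kr + 1))) in E1; [|nra].
      replace (exp (/ (kr + 1)) * (kr + 1) * (kr / (kr + 1))) with (kr * exp (/ (kr + 1))) in E1 by (field; lra).
      replace (exp (/ (kr + 1)) * (kr + 1) * exp (- / (kr + 1))) with ((kr + 1) * (exp (/ (kr + 1)) * exp (- / (kr + 1)))) in E1 by ring.
      rewrite Hm in E1; lra. }
    assert (E3 : 0 <= kr * exp (/ (kr + 1))) by (apply Rmult_le_pos; [lra| left; apply exp_pos]).
    pose proof (pow_incr _ _ (S k) (conj E3 E2)) as E4. clear E2 E3.
    rewrite Rpow_mult_distr exp_pow in E4.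
    replace (INR (S k) * / (kr + 1)) with 1 in E4 by (rewrite S_INR; fold kr; field; lra).
    lra. }
  replace (Factorial.fact (S k)) with (S k * Factorial.fact k)%nat by reflexivity.
  rewrite mult_INR S_INR; fold kr.
  rewrite exp_plus.
  assert (0 < exp 1) by apply exp_pos.
  replace ((kr + 1) * INR (Factorial.fact k) * (exp kr * exp 1)) with ((kr + 1) * exp 1 * (INR (Factorial.fact k) * exp kr)) by ring.
  apply Rle_trans with ((kr + 1) * exp 1 * (exp 1 * kr ^ S k)).
  + apply Rmult_le_compat_l; [nra | exact IH'].
  + replace ((kr + 1) ^ S (S k)) with ((kr + 1) * (kr + 1) ^ S k) by reflexivity.
    assert (0 <= (kr + 1) * exp 1) by nra.
    replace (exp 1 * ((kr + 1) * (kr + 1) ^ S k)) with ((kr + 1) * exp 1 * (kr + 1) ^ S k) by ring.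
    apply Rmult_le_compat_l; [lra | exact key].
Qed.
Lemma final_real (n m : nat) (h : R) :
  le 1 m -> 6 <= INR n ->
  3 * (2 * INR m / INR n) <= ln (INR n) ->
  0 <= h -> h <= exp (2 * INR m / INR n) - 1 - 2 * INR m / INR n ->
  INR (Factorial.fact (2 * m)) * h ^ n /
    ((2 * INR m / INR n) ^ (2 * m) * (INR n * (INR n - 1) - 2 * INR m) ^ m)
   <= INR n * exp (- (2 * INR m * exp (- (2 * INR m / INR n)))).
Proof.
intros Hm.
assert (mr1 : 1 <= INR m) by (apply (le_INR 1); exact Hm).
revert mr1. set nr := INR n. set mr := INR m. set k := 2 * mr. set lam := k / nr.
intros mr1 Hn Hl Hh0 Hh.
assert (nr0 : 0 < nr) by lra.
assert (lamnr : lam * nr = k) by (unfold lam; field; lra).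
assert (k2 : 2 <= k) by (unfold k; lra).
assert (lam0 : 0 < lam) by nra.
assert (lnb : ln nr <= nr - 1).
{ generalize (exp_ineq1_le (ln nr)); rewrite exp_ln; lra. }
set x := (1 + lam) / nr.
assert (xnr : x * nr = 1 + lam) by (unfold x; field; lra).
assert (x0 : 0 <= x) by (unfold x; apply Rle_mult_inv_pos; lra).
assert (xh : x <= 1/2).
{ assert (2 * (1 + lam) <= nr) by lra. apply (Rmult_le_reg_r nr); [lra|]. rewrite xnr; lra. }
set L := nr * (nr - 1) - k.
assert (LE : L = nr * nr * (1 - x)) by (unfold L; nra).
assert (L0 : 0 < L) by (rewrite LE; nra).
assert (SC : (nr * nr) ^ m <= L ^ m * exp (mr * (2 * x))).
{ assert (c1 : nr * nr <= L * exp (2 * x)).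
  { generalize (exp_ineq1_le (2 * x)); intro E.
    apply Rle_trans with (L * (1 + 2 * x)); [rewrite LE; nra | apply Rmult_le_compat_l; lra]. }
  replace (exp (mr * (2 * x))) with (exp (2 * x) ^ m) by (rewrite exp_pow; reflexivity).
  rewrite -Rpow_mult_distr.
  apply pow_incr; split; [nra | exact c1]. }
assert (SA : INR (Factorial.fact (2 * m)) <= exp 1 * (k * k ^ (2 * m)) * exp (- k)).
{ assert (F := fact_bound (2 * m) ltac:(lia)).
  rewrite mult_INR in F; replace (INR 2) with 2 in F by reflexivity. fold mr k in F.
  replace (k ^ S (2 * m)) with (k * k ^ (2 * m)) in F by reflexivity.
  assert (Ek : exp k * exp (- k) = 1) by (rewrite -exp_plus; replace (k + - k) with 0 by ring; apply exp_0).
  apply (Rmult_le_compat_r (exp (- k))) in F; [|left; apply exp_pos].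
  replace (INR (Factorial.fact (2 * m)) * exp k * exp (- k)) with (INR (Factorial.fact (2 * m)) * (exp k * exp (- k))) in F by ring.
  rewrite Ek Rmult_1_r in F; exact F. }
set u := exp (- lam) * (1 + lam).
assert (El : exp lam * exp (- lam) = 1) by (rewrite -exp_plus; replace (lam + - lam) with 0 by ring; apply exp_0).
assert (u1 : u <= 1).
{ unfold u; generalize (exp_ineq1_le lam); intro E.
  assert (0 < exp (- lam)) by apply exp_pos. nra. }
assert (SB : h ^ n <= exp (k - nr * u)).
{ assert (H1 : h <= exp (lam - u)).
  { apply Rle_trans with (exp lam * (1 - u)).
    - replace (exp lam * (1 - u)) with (exp lam - 1 - lam); [exact Hh|].
      unfold u. replace (exp lam * (1 - exp (- lam) * (1 + lam))) with (exp lam - (exp lam * exp (- lam)) * (1 + lam)) by ring.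
      rewrite El; ring.
    - unfold Rminus; rewrite exp_plus. apply Rmult_le_compat_l; [left; apply exp_pos|].
      generalize (exp_ineq1_le (- u)); lra. }
  apply Rle_trans with (exp (lam - u) ^ n).
  - apply pow_incr; lra.
  - rewrite exp_pow; fold nr; apply exp_le_mono; nra. }
assert (key : exp 1 * k * exp (mr * (2 * x) - nr * u) <= nr * exp (- (k * exp (- lam)))).
{ assert (e1 : exp 1 * lam <= exp lam).
  { generalize (exp_ineq1_le (lam - 1)); intro E.
    replace lam with (1 + (lam - 1)) at 2 by ring. rewrite exp_plus.
    assert (0 < exp 1) by apply exp_pos. nra. }
  assert (nu : nr * u = nr * exp (- lam) + k * exp (- lam)) by (unfold u; rewrite -lamnr; ring).
  assert (mx : mr * (2 * x) = lam * (1 + lam)).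
  { apply (Rmult_eq_reg_r nr); [|lra].
    replace (mr * (2 * x) * nr) with (k * (x * nr)) by (unfold k; ring).
    rewrite xnr -lamnr; ring. }
  assert (big : lam * (2 + lam) <= nr * exp (- lam)).
  { assert (q1 : 1 + lam <= exp lam) by apply exp_ineq1_le.
    assert (q2 : exp (3 * lam) <= nr).
    { rewrite -[X in _ <= X](exp_ln nr); [apply exp_le_mono; lra | lra]. }
    assert (q3 : exp (3 * lam) = exp lam * exp lam * exp lam).
    { replace (3 * lam) with (lam + lam + lam) by ring; rewrite !exp_plus; ring. }
    assert (0 < exp (- lam)) by apply exp_pos.
    assert (0 < exp lam) by apply exp_pos.
    assert (lam * (2 + lam) * exp lam <= nr) by nra.
    apply (Rmult_le_compat_r (exp (- lam))) in H1; [|lra].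
    replace (lam * (2 + lam) * exp lam * exp (- lam)) with (lam * (2 + lam) * (exp lam * exp (- lam))) in H1 by ring.
    rewrite El in H1; lra. }
  rewrite nu mx.
  replace (lam * (1 + lam) - (nr * exp (- lam) + k * exp (- lam))) with
     ((lam * (1 + lam) - nr * exp (- lam)) + - (k * exp (- lam))) by ring.
  rewrite exp_plus.
  assert (0 < exp (- (k * exp (- lam)))) by apply exp_pos.
  assert (t : exp 1 * k * exp (lam * (1 + lam) - nr * exp (- lam)) <= nr).
  { rewrite -lamnr.
    apply Rle_trans with (exp lam * nr * exp (lam * (1 + lam) - nr * exp (- lam))).
    - assert (0 < exp (lam * (1 + lam) - nr * exp (- lam))) by apply exp_pos.
      replace (exp 1 * (lam * nr) * exp (lam * (1 + lam) - nr * exp (- lam))) with ((exp 1 * lam) * (nr * exp (lam * (1 + lam) - nr * exp (- lam)))) by ring.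
      replace (exp lam * nr * exp (lam * (1 + lam) - nr * exp (- lam))) with (exp lam * (nr * exp (lam * (1 + lam) - nr * exp (- lam)))) by ring.
      apply Rmult_le_compat_r; [nra|exact e1].
    - replace (exp lam * nr * exp (lam * (1 + lam) - nr * exp (- lam))) with
        (nr * (exp lam * exp (lam * (1 + lam) - nr * exp (- lam)))) by ring.
      rewrite -exp_plus.
      assert (exp (lam + (lam * (1 + lam) - nr * exp (- lam))) <= 1).
      { apply Rle_trans with (exp 0); [apply exp_le_mono; nra | rewrite exp_0; lra]. }
      nra. }
  nra. }
assert (lampow : (lam ^ (2 * m)) * (nr * nr) ^ m = k ^ (2 * m)).
{ rewrite -pow_sqr -Rpow_mult_distr. f_equal. exact lamnr. }
assert (nn0 : 0 < (nr * nr) ^ m) by (apply pow_lt; nra).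
assert (kp : 0 < k ^ (2 * m)) by (apply pow_lt; unfold k; lra).
assert (Lp : 0 < L ^ m) by (apply pow_lt; lra).
assert (lp : 0 < lam ^ (2 * m)) by (apply pow_lt; lra).
fold L.
apply (Rmult_le_reg_r (lam ^ (2 * m) * L ^ m)); [nra|].
unfold Rdiv; rewrite Rmult_assoc Rinv_l; [rewrite Rmult_1_r | nra].
apply (Rmult_le_reg_r ((nr * nr) ^ m)); [exact nn0|].
replace (nr * exp (- (k * exp (- lam))) * (lam ^ (2 * m) * L ^ m) * (nr * nr) ^ m)
  with (nr * exp (- (k * exp (- lam))) * (k ^ (2 * m) * L ^ m)) by (rewrite -lampow; ring).
apply Rle_trans with ((exp 1 * (k * k ^ (2 * m)) * exp (- k)) * exp (k - nr * u) * (L ^ m * exp (mr * (2 * x)))).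
- apply Rmult_le_compat; [| | |exact SC].
  + apply Rmult_le_pos; [apply pos_INR | apply pow_le; exact Hh0].
  + apply pow_le; nra.
  + apply Rmult_le_compat; [apply pos_INR | apply pow_le; exact Hh0 | exact SA | exact SB].
- replace (exp 1 * (k * k ^ (2 * m)) * exp (- k) * exp (k - nr * u) * (L ^ m * exp (mr * (2 * x))))
   with ((exp 1 * k * (exp (- k) * exp (k - nr * u) * exp (mr * (2 * x)))) * (k ^ (2 * m) * L ^ m)) by ring.
  rewrite -!exp_plus.
  replace (- k + (k - nr * u) + mr * (2 * x)) with (mr * (2 * x) - nr * u) by ring.
  apply Rmult_le_compat_r; [nra | exact key].
Qed.

Lemma fullsum_le (D : finType) (lam : R) : 0 <= lam -> fullsum D lam <= exp lam.
Proof.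
move=> l0; have f := exp_sum_le lam #|D| l0; rewrite sum_f_R0E big_mkord in f.
apply: Rle_trans f; right.
rewrite /fullsum; apply: eq_bigr => j _.
by rewrite INRE factE RpowE RinvE RmultE GRing.mulrC.
Qed.

Lemma hsum_le (D : finType) (lam : R) : 0 < lam -> leq 1 #|D| ->
  hsum D lam <= exp lam - 1 - lam.
Proof.
move=> l0 D0.
have e : fullsum D lam = 1 + lam + hsum D lam := hsum_split lam D0.
have f := fullsum_le D lam (Rlt_le _ _ l0).
lra.
Qed.

Lemma core_std (n m : nat) (lam : R) : 0 < lam ->
  INR #|@okseq ('I_m * bool)%type n| <=
  INR (Factorial.fact (2 * m)) * (hsum ('I_m * bool)%type lam) ^ n / lam ^ (2 * m).
Proof.
move=> l0.
have := @okseq_bound ('I_m * bool)%type R lam (introT RltP l0) n.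
rewrite card_prod card_ord card_bool mulnC => H.
apply/RleP.
rewrite INRE (INRE (Factorial.fact _)) factE RpowE RpowE RdivE RmultE.
exact H.
Qed.

Lemma ratio_le a g S P Fm T Lm : 0 <= a -> 0 < Fm -> 0 < T -> 0 < Lm ->
  a * Fm * T <= S -> g * Fm = P -> Lm <= P * T -> a / g <= S / Lm.
Proof.
move=> a0 F0 T0 L0 H1 H2 H3.
have P0 : 0 < P by nra.
have g0 : 0 < g by nra.
unfold Rdiv.
apply (Rmult_le_reg_r (g * Lm)); [nra|].
replace (a * / g * (g * Lm)) with (a * Lm) by (field; lra).
replace (S * / Lm * (g * Lm)) with (S * g) by (field; lra).
apply (Rmult_le_reg_r Fm); [lra|].
replace (S * g * Fm) with (S * P) by (rewrite -H2; ring).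
apply Rle_trans with (a * Fm * T * P); [|apply Rmult_le_compat_r; lra].
replace (a * Lm * Fm) with ((a * Fm) * Lm) by ring.
replace (a * Fm * T * P) with ((a * Fm) * (P * T)) by ring.
apply Rmult_le_compat_l; [nra|lra].
Qed.

Lemma ln_le_mono x y : 0 < x -> x <= y -> ln x <= ln y.
Proof.
move=> x0 xy; destruct (Rle_lt_or_eq_dec _ _ xy) as [h|h].
- left; apply ln_increasing; lra.
- rewrite h; lra.
Qed.

Lemma asym (C : R) : exists N : nat, forall n : nat, le N n ->
  6 <= INR n /\ forall m : nat, INR m <= C * INR n * ln (ln (INR n)) ->
  3 * (2 * INR m / INR n) <= ln (INR n).
Proof.
set C' := Rmax C 1.
have C1 : 1 <= C' by apply Rmax_r.
have CC : C <= C' by apply Rmax_l.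
set Y := 144 * (C' * C').
destruct (INR_archimed 1 (exp Y)) as [N HN]; [lra|].
exists N => n Hn.
have nN : INR N <= INR n by apply le_INR.
have ne : exp Y < INR n by lra.
have Y144 : 144 <= Y by (unfold Y; nra).
have eY := exp_ineq1_le Y.
have n0 : 0 < INR n by lra.
split; [lra|].
move=> m Hm.
set y := ln (INR n).
have yY : Y < y.
  rewrite -(ln_exp Y); apply ln_increasing; [apply exp_pos | exact ne].
have y0 : 0 < y by lra.
have ly0 : 0 <= ln y.
  rewrite -ln_1; apply ln_le_mono; lra.
set s := sqrt y.
have ss : s * s = y by apply sqrt_sqrt; lra.
have s0 : 0 <= s by apply sqrt_pos.
have Yd : Y = 144 * (C' * C') by [].
have s12 : 12 * C' <= s.
  destruct (Rle_or_lt (12 * C') s) as [h|h]; [exact h|].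
  have : s * s < (12 * C') * (12 * C') by nra.
  lra.
have lns : ln y <= 2 * (s - 1).
  have sp : 0 < s by nra.
  rewrite -ss ln_mult //.
  have := exp_ineq1_le (ln s); rewrite exp_ln //; lra.
have mm : 2 * INR m / INR n <= 2 * (C' * ln y).
  have : INR m / INR n <= C * ln y.
    unfold Rdiv; apply (Rmult_le_reg_r (INR n)); [lra|].
    rewrite Rmult_assoc Rinv_l; [|lra]. fold y in Hm. lra.
  have : C * ln y <= C' * ln y by apply Rmult_le_compat_r.
  unfold Rdiv; move=> h1 h2.
  replace (2 * INR m * / INR n) with (2 * (INR m * / INR n)) by ring. lra.
have : 6 * (C' * ln y) <= 12 * C' * s.
  have : C' * ln y <= C' * (2 * (s - 1)) by apply Rmult_le_compat_l; lra.
  nra.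
nra.
Qed.

Lemma INR_muln a b : INR (muln a b) = INR a * INR b.
Proof. exact: mult_INR. Qed.

Lemma INR_expn a k : INR (expn a k) = INR a ^ k.
Proof. elim: k => [|k IH]; first by rewrite expn0. by rewrite expnS INR_muln IH. Qed.

Lemma INR_double (a : nat) : INR (a.*2) = 2 * INR a.
Proof. rewrite -ssrnat.addnn; have := plus_INR a a; move=> ->; simpl; ring. Qed.

Lemma INR_subn a b : le b a -> INR (subn a b) = INR a - INR b.
Proof. exact: minus_INR. Qed.

Lemma main_bound (n m : nat) :
  le 1 m -> 6 <= INR n.+1 -> 3 * (2 * INR m / INR n.+1) <= ln (INR n.+1) ->
  INR #|Aset n.+1 m| / INR #|Gnm n.+1 m| <=
  INR n.+1 * exp (- (2 * INR m * exp (- (2 * INR m / INR n.+1)))).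
Proof.
move=> m1 n6 Hl.
set nr := INR n.+1 in n6 Hl *.
set lam := 2 * INR m / nr in Hl *.
have nr0 : 0 < nr by lra.
have mr1 : 1 <= INR m by apply: (le_INR 1).
have lam0 : 0 < lam by (unfold lam; apply Rdiv_lt_0_compat; lra).
have lnb : ln nr <= nr - 1.
  have := exp_ineq1_le (ln nr); rewrite exp_ln; lra.
set N2 := 'C(n.+1, 2).
have N2r : 2 * INR N2 = nr * (nr - 1).
  rewrite -INR_double two_binom INR_muln /nr; change (n.+1.-1) with n; rewrite S_INR; ring.
have mN : leq m N2.
  apply/ssrnat.leP; apply: INR_le.
  have : 2 * INR m <= nr * (nr - 1) / 3.
    have : lam <= (nr - 1) / 3 by lra.
    unfold lam, Rdiv => h.
    apply (Rmult_le_reg_r (/ nr)); [apply Rinv_0_lt_compat; lra|].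
    replace (nr * (nr - 1) * / 3 * / nr) with ((nr - 1) * / 3) by (field; lra). lra.
  have : 0 <= nr * (nr - 1) by nra.
  lra.
have Lpos : 0 < nr * (nr - 1) - 2 * INR m.
  have : 2 * INR m <= nr * (nr - 1) / 3.
    have : lam <= (nr - 1) / 3 by lra.
    unfold lam, Rdiv => h.
    apply (Rmult_le_reg_r (/ nr)); [apply Rinv_0_lt_compat; lra|].
    replace (nr * (nr - 1) * / 3 * / nr) with ((nr - 1) * / 3) by (field; lra). lra.
  have : 6 <= nr - 1 + 1 by lra.
  nra.
have Fa := Aset_Sig n.+1 m.
have Fb := Sig_okseq n m.
have Fc := card_Gnm n.+1 m.
have Fd := bin_ffact N2 m.
have Fe := ffact_lb mN.
set S := #|okseq _ n.+1| in Fb.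
set h := hsum ('I_m * bool)%type lam.
have hD : leq 1 #|{: 'I_m * bool}| by rewrite card_prod card_ord card_bool muln2 -ssrnat.addnn; apply: leq_trans (introT ssrnat.leP m1) (leq_addr _ _).
have h0 : 0 <= h by apply/RleP; apply: hsum_ge0; apply/RltP.
have hle : h <= exp lam - 1 - lam by apply: hsum_le.
have core := core_std n.+1 m lam lam0.
fold S h in core.
apply: Rle_trans (final_real n.+1 m h m1 n6 Hl h0 hle).
apply: Rle_trans (_ : INR S / (nr * (nr - 1) - 2 * INR m) ^ m <= _).
  apply: (ratio_le _ _ _ (INR (falling_factorial N2 m)) (INR (factorial m)) (2 ^ m)).
  - exact: pos_INR.
  - by apply: lt_0_INR; apply/ssrnat.ltP; exact: fact_gt0.
  - apply: pow_lt; lra.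
  - apply: pow_lt; lra.
  - rewrite -INR_muln -[2]/(INR 2) -INR_expn -INR_muln; apply: le_INR; apply/ssrnat.leP.
    by rewrite Fa.
  - by rewrite -INR_muln Fc Fd.
  - have H := le_INR _ _ (ssrnat.leP Fe).
    have i2 : INR 2 = 2 by simpl; ring.
    rewrite INR_muln !INR_expn INR_subn in H; last by apply/ssrnat.leP; rewrite leq_double.
    rewrite !INR_double N2r i2 in H; exact H.
unfold Rdiv.
rewrite Rinv_mult -Rmult_assoc.
apply: Rmult_le_compat_r; last exact: core.
left; apply: Rinv_0_lt_compat; apply: pow_lt; exact: Lpos.
Qed.

From mathcomp Require Import all_boot.
From Stdlib Require Import Reals.
Open Scope R_scope.

Theorem lemma6p1 (m : nat -> nat)
  (Hm : exists (C : R) (N0 : nat), forall n : nat, (N0 <= n)%nat ->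
          INR (m n) <= C * INR n * ln (ln (INR n))) :
  exists N : nat, forall n : nat, (N <= n)%nat ->
    prob_mindeg_ge2 n (m n) <=
      INR n * exp (- (2 * INR (m n) * exp (- (2 * INR (m n) / INR n)))).
Proof.
case: Hm => C [N0 HC].
case: (asym C) => N1 HN1.
exists (maxn (maxn N0 N1) 1).
move=> n Hn.
have HN0 : leq N0 n := leq_trans (leq_trans (leq_maxl N0 N1) (leq_maxl _ 1)) Hn.
have HN1n : le N1 n.
  by apply/ssrnat.leP; exact: leq_trans (leq_trans (leq_maxr N0 N1) (leq_maxl _ 1)) Hn.
have n1 : leq 1 n := leq_trans (leq_maxr _ _) Hn.
case: (HN1 n HN1n) => n6 Hl0.
have Hl := Hl0 (m n) (HC n HN0).
move: n1 n6 Hl; clear HN0 HN1n Hn Hl0.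
case: n => [//|n] _ n6 Hl.
rewrite /prob_mindeg_ge2.
move: Hl; case E: (m n.+1) => [|mm] Hl.
- have -> : [set E0 in Gnm n.+1 0 | mindeg_ge2 E0] = set0.
    apply/setP => E0; rewrite !inE; apply/negP => /andP[/andP[_ /eqP E00] /forallP md].
    have h2 := md ord0; rewrite /deg in h2.
    have h1 : leq #|[set e in E0 | ord0 \in e]| #|E0|.
      by apply: subset_leq_card; apply/subsetP => e; rewrite inE => /andP[].
    by move: (leq_trans h2 h1); rewrite E00.
  rewrite cards0; change (INR 0) with 0; unfold Rdiv; rewrite Rmult_0_l.
  apply: Rmult_le_pos; [exact: pos_INR | left; exact: exp_pos].
- exact: (main_bound n mm.+1 ltac:(lia) n6 Hl).
Qed.
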